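(* Let $\mathcal{G}$ be a class of graphs that is closed under removing edges (if $G\in\mathcal{G}$, then every graph obtained from $G$ by deleting edges, keeping all vertices, is in $\mathcal{G}$). Let $c$ be a constant, let $f(x)=cx$, and let $g$ be an arbitrary function. Suppose that every graph $G\in\mathcal{G}$ with $n$ vertices and $m$ edges satisfies $cr(G)\geq f(m)-g(n)$. Then for every positive integer $k$, every graph $G\in\mathcal{G}$ with $n$ vertices and $m$ edges satisfies $$cr_k(G)\geq f(m)-k\cdot g(n).$$
   Context: $cr(G)$ denotes the minimum number of edge crossings over all (simple) drawings of $G$ in the plane, where in a simple drawing no two edges cross more than once and no three edges cross at a point. For a positive integer $k$, the $k$-planar crossing number $cr_k(G)$ of $G=(V,E)$ is the minimum of $cr(G_1)+\cdots+cr(G_k)$ over all decompositions of $G$ into $k$ subgraphs $G_i=(V,E_i)$ with $E=E_1\cup\dots\cup E_k$ and the $E_i$ pairwise disjoint. *)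

(* Defs.v *)
From HB Require Import structures.
From mathcomp Require Import all_boot all_order all_algebra.
From mathcomp Require Import all_classical all_reals all_analysis.
From mathcomp Require Import Rstruct Rstruct_topology.
Set Implicit Arguments. Unset Strict Implicit. Unset Printing Implicit Defensive.
Import Order.TTheory GRing.Theory Num.Theory.
Local Open Scope classical_set_scope.
Local Open Scope ring_scope.

Notation RR := Rdefinitions.R.
Definition point := (RR * RR)%type.

Definition is_graph n (E : {set {set 'I_n}}) : Prop :=
  forall e, e \in E -> #|e| = 2%N.

(* A drawing: positions of vertices and, for each potential edge, a curve
   parametrized by [0,1]. *)
Record drawing (n : nat) := Drawing {
  dpos : 'I_n -> point;
  darc : {set 'I_n} -> RR -> point }.

Definition arc_int n (D : drawing n) (e : {set 'I_n}) : set point :=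
  [set p | exists t : RR, (0 < t < 1) /\ darc D e t = p].

Definition is_drawing n (E : {set {set 'I_n}}) (D : drawing n) : Prop :=
  injective (dpos D) /\
  forall e, e \in E ->
    [/\ {within `[0%R, 1%R], continuous (darc D e)},
        (forall s t : RR, 0 <= s <= 1 -> 0 <= t <= 1 ->
            darc D e s = darc D e t -> s = t),
        (exists u v, e = (u |: [set v])%SET /\ darc D e 0 = dpos D u /\
                     darc D e 1 = dpos D v) &
        (forall (t : RR) w, 0 < t < 1 -> darc D e t <> dpos D w)].

Definition crosses n (D : drawing n) (e f : {set 'I_n}) : Prop :=
  arc_int D e `&` arc_int D f !=set0.

Definition is_simple n (E : {set {set 'I_n}}) (D : drawing n) : Prop :=
  (forall e f, e \in E -> f \in E -> e != f ->
     forall p q, (arc_int D e `&` arc_int D f) p ->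
                 (arc_int D e `&` arc_int D f) q -> p = q) /\
  (forall e f h, e \in E -> f \in E -> h \in E ->
     e != f -> f != h -> e != h ->
     arc_int D e `&` arc_int D f `&` arc_int D h = set0).

(* number of crossings of a simple drawing = number of unordered pairs of
   distinct edges that cross (each such pair crosses exactly once) *)
Definition ncross n (E : {set {set 'I_n}}) (D : drawing n) : nat :=
  (#|finset (fun ef : {set 'I_n} * {set 'I_n} =>
      [&& ef.1 \in E, ef.2 \in E, ef.1 != ef.2 & `[< crosses D ef.1 ef.2 >]])|
   %/ 2)%N.

Definition cr_achieves n (E : {set {set 'I_n}}) (m : nat) : Prop :=
  exists D : drawing n, [/\ is_drawing E D, is_simple E D & ncross E D = m].

(* cr(G): minimum number of crossings over all simple drawings
   (0 by convention if there were no drawing, which never happens). *)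
Definition cr n (E : {set {set 'I_n}}) : nat :=
  match pselect (exists m, `[< cr_achieves E m >]) with
  | left H => ex_minn H
  | right _ => 0%N
  end.

Local Close Scope classical_set_scope.

Definition is_decomp n k (E : {set {set 'I_n}}) (F : 'I_k -> {set {set 'I_n}})
  : Prop :=
  (forall i j, i != j -> [disjoint F i & F j]) /\
  \bigcup_(i < k) F i = E.

Definition crk_achieves n k (E : {set {set 'I_n}}) (m : nat) : Prop :=
  exists F : 'I_k -> {set {set 'I_n}},
    is_decomp E F /\ (\sum_(i < k) cr (F i))%N = m.

Definition crk n (k : nat) (E : {set {set 'I_n}}) : nat :=
  match pselect (exists m, `[< crk_achieves k E m >]) with
  | left H => ex_minn H
  | right _ => 0%N
  end.

(* Main.v *)
Require Import Defs.
From HB Require Import structures.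
From mathcomp Require Import all_boot all_order all_algebra.
From mathcomp Require Import all_classical all_reals all_analysis.
From mathcomp Require Import Rstruct Rstruct_topology.
Import Order.TTheory GRing.Theory Num.Theory.
Local Open Scope ring_scope.

Theorem lemma2
  (Cls : forall n : nat, {set {set 'I_n}} -> Prop)
  (Cls_closed : forall n (E E' : {set {set 'I_n}}),
      Cls n E -> E' \subset E -> Cls n E')
  (c : RR) (g : nat -> RR)
  (Hcr : forall n (E : {set {set 'I_n}}), Cls n E -> is_graph E ->
      (cr E)%:R >= c * (#|E|)%:R - g n)
  (k : nat) (hk : (0 < k)%N) :
  forall n (E : {set {set 'I_n}}), Cls n E -> is_graph E ->
    (crk k E)%:R >= c * (#|E|)%:R - k%:R * g n.
Proof.
move=> n E HE gE.
rewrite /crk; case: pselect => [H|H]; last first.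
  exfalso; apply: H.
  pose i0 : 'I_k := Ordinal hk.
  pose F := fun i : 'I_k => if i == i0 then E else (finset.set0 : {set {set 'I_n}}).
  exists (\sum_(i < k) cr (F i))%N; apply/asboolP; exists F; split => //.
  split.
    move=> i j ij; rewrite /F; case: ifP => /eqP Hi; case: ifP => /eqP Hj;
      [by case/eqP: ij; rewrite Hi Hj| | |]; by rewrite -setI_eq0 ?finset.set0I ?finset.setI0.
  apply/finset.setP => x; apply/finset.bigcupP/idP => [[i _]|xE].
    by rewrite /F; case: ifP => // _; rewrite inE.
  by exists i0 => //; rewrite /F eqxx.
case: ex_minnP => m /asboolP [F [[disjF bigF] <-]] _.
have sub : forall i, F i \subset E by move=> i; rewrite -bigF; exact: (finset.bigcup_sup i).
have cardE : #|E| = (\sum_(i < k) #|F i|)%N.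
  rewrite -sum1_card -bigF (partition_disjoint_bigcup _ _ disjF).
  by apply: eq_bigr => i _; rewrite sum1_card.
rewrite cardE natr_sum mulr_sumr natr_sum.
have -> : k%:R * g n = \sum_(i < k) g n by rewrite sumr_const card_ord mulr_natl.
rewrite -sumrB; apply: ler_sum => i _; apply: Hcr.
  exact: Cls_closed HE (sub i).
by move=> e eF; apply: gE; exact: (fintype.subsetP (sub i)).
Qed.
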